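(* Let $k\ge2$ and let \[ A_\epsilon+\lambda E_\epsilon=\begin{bmatrix}\lambda E_{1,1} & A_{1,2} & & \\ & \ddots & \ddots & \\ & & \lambda E_{k-1,k-1} & A_{k-1,k}\end{bmatrix} \] be a bidiagonal pencil with $k-1$ block rows of sizes $s_1,\dots,s_{k-1}$ and $k$ block columns of sizes $t_1,\dots,t_k$, where $t_{i+1}=s_i$ for $i=1,\dots,k-1$, all unmarked blocks are zero, and \[ A_{i,i+1}\in\mathbb{C}^{s_i\times s_i},\qquad E_{i,i}=\begin{bmatrix}0&\hat E_{i,i}\end{bmatrix}\in\mathbb{C}^{s_i\times t_i},\qquad \hat E_{i,i}\in\mathbb{C}^{s_i\times s_i}, \] with both $A_{i,i+1}$ and $\hat E_{i,i}$ invertible and upper triangular. Let $n=\sum_{i=1}^k t_i$, let $r$ be the normal rank of the pencil, and put \[ Z_i=\begin{bmatrix}0&-A_{i,i+1}^{-1}\hat E_{i,i}\end{bmatrix}\in\mathbb{C}^{s_i\times t_i},\qquad N(\lambda):=\begin{bmatrix}I_{t_1}\\ Z_1\lambda\\ \vdots\\ Z_{k-1}\cdots Z_1\lambda^{k-1}\end{bmatrix}\in\mathbb{C}[\lambda]^{n\times(n-r)}. \] Then the columns of $N(\lambda)$ form a minimal polynomial basis for the right null space of $A_\epsilon+\lambda E_\epsilon$.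
   Context: The normal rank is the rank over $\mathbb{C}(\lambda)$. The right null space of a pencil $P(\lambda)$ is $\{x\in\mathbb{C}(\lambda)^n: P(\lambda)x(\lambda)=0\}$. A minimal polynomial basis of it is a polynomial matrix whose columns form a basis of this $\mathbb{C}(\lambda)$-space and whose sum of column degrees is minimal among all polynomial bases. *)

(* Defs.v *)
From HB Require Import structures.
From mathcomp Require Import all_boot all_order all_algebra.
From mathcomp Require Import complex.
From mathcomp Require Import reals.
Set Implicit Arguments. Unset Strict Implicit. Unset Printing Implicit Defensive.
Import Order.TTheory GRing.Theory Num.Theory.
Local Open Scope ring_scope.

(* entry of a matrix addressed by natural-number indices (0 outside the range) *)
Definition mxn (T : zmodType) (m n : nat) (M : 'M[T]_(m, n)) (a b : nat) : T :=
  match insub a, insub b with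
  | Some i, Some j => M i j
  | _, _ => 0
  end.

Definition toF (C : idomainType) (m n : nat) (P : 'M[{poly C}]_(m, n)) :
  'M[{fraction {poly C}}]_(m, n) := map_mx (@tofrac _) P.

Definition normal_rank (C : idomainType) (m n : nat) (P : 'M[{poly C}]_(m, n)) : nat :=
  \rank (toF P).

Definition rnull_basis (F : fieldType) (m n d : nat) (P : 'M[F]_(m, n)) (B : 'M[F]_(n, d)) : Prop :=
  [/\ P *m B = 0,
      \rank B = d &
      forall x : 'cV[F]_n, P *m x = 0 -> exists c : 'cV[F]_d, x = B *m c].

Definition poly_rnull_basis (C : idomainType) (m n d : nat)
  (P : 'M[{poly C}]_(m, n)) (B : 'M[{poly C}]_(n, d)) : Prop :=
  rnull_basis (toF P) (toF B).

Definition coldeg_sum (C : idomainType) (n d : nat) (B : 'M[{poly C}]_(n, d)) : nat :=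
  (\sum_(j < d) \max_(i < n) (size (B i j)).-1)%N.

Definition min_poly_basis (C : idomainType) (m n d : nat)
  (P : 'M[{poly C}]_(m, n)) (B : 'M[{poly C}]_(n, d)) : Prop :=
  poly_rnull_basis P B /\
  forall (d' : nat) (B' : 'M[{poly C}]_(n, d')),
    poly_rnull_basis P B' -> (coldeg_sum B <= coldeg_sum B')%N.

Definition upper_triangular (C : zmodType) (m : nat) (M : 'M[C]_m) : Prop :=
  forall i j : 'I_m, (j < i)%N -> M i j = 0.

(* ---------- the bidiagonal pencil (0-based block indices) ----------
   Column blocks j = 0..k-1 have sizes t j (paper: t_{j+1}).
   Row blocks i = 0..k-2 have sizes s_i = t (i+1).
   Row block i contains lambda E_{i,i} in column block i and A_{i,i+1}
   in column block i+1, with E_{i,i} = [0 Ehat i]. *)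

Section Pencil.
Variable C : fieldType.
Variables (k : nat) (t : nat -> nat).
Variables (A Ehat : forall i : nat, 'M[C]_(t i.+1)).

Definition coff (j : nat) : nat := (\sum_(j' < j) t j')%N.
Definition ncols : nat := coff k.
Definition roff (i : nat) : nat := (\sum_(i' < i) t i'.+1)%N.
Definition nrows : nat := roff k.-1.

Definition Eblk (i a b : nat) : C :=
  if (t i - t i.+1 <= b)%N then mxn (Ehat i) a (b - (t i - t i.+1)) else 0.

Definition pencil : 'M[{poly C}]_(nrows, ncols) :=
  \matrix_(p < nrows, q < ncols)
    \sum_(i < k.-1)
      (if (roff i <= p < roff i.+1)%N then
         (if (coff i <= q < coff i.+1)%N
          then (Eblk i (p - roff i) (q - coff i))%:P * 'X else 0)
       + (if (coff i.+1 <= q < coff i.+2)%N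
          then (mxn (A i) (p - roff i) (q - coff i.+1))%:P else 0)
       else 0).

Definition Zblk (i : nat) : 'M[C]_(t i.+1, t i) :=
  \matrix_(a < t i.+1, b < t i)
    (if (t i - t i.+1 <= b)%N
     then mxn (- (invmx (A i) *m Ehat i)) a (b - (t i - t i.+1)) else 0).

Fixpoint Zprod (i : nat) : 'M[C]_(t i, t 0) :=
  match i as i0 return 'M[C]_(t i0, t 0) with
  | 0 => 1%:M
  | i'.+1 => Zblk i' *m Zprod i'
  end.

Definition Nmat : 'M[{poly C}]_(ncols, t 0) :=
  \matrix_(q < ncols, c < t 0)
    \sum_(j < k)
      (if (coff j <= q < coff j.+1)%N
       then (mxn (Zprod j) (q - coff j) c)%:P * 'X^j else 0).

End Pencil.

(* Main.v *)
Require Import Defs.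
From HB Require Import structures.
From mathcomp Require Import all_boot all_order all_algebra.
From mathcomp Require Import complex.
From mathcomp Require Import reals.
From mathcomp Require Import zify ring fingroup perm.
Set Implicit Arguments. Unset Strict Implicit. Unset Printing Implicit Defensive.
Import Order.TTheory GRing.Theory Num.Theory.
Local Open Scope ring_scope.


Lemma mxnE (T : zmodType) m n (M : 'M[T]_(m,n)) (i : 'I_m) (j : 'I_n) :
  mxn M i j = M i j.
Proof. by rewrite /mxn !valK. Qed.

Lemma mxnE' (T : zmodType) m n (M : 'M[T]_(m,n)) a b (ha : (a < m)%N) (hb : (b < n)%N) :
  mxn M a b = M (Ordinal ha) (Ordinal hb).
Proof. by rewrite -mxnE. Qed.

Lemma mxn_out (T : zmodType) m n (M : 'M[T]_(m,n)) a b :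
  ~~ ((a < m) && (b < n))%N -> mxn M a b = 0.
Proof.
rewrite /mxn; case: (ltnP a m) => ha /=; last by rewrite insubN // -ltnNge.
by move=> hb; rewrite (insubT (fun x => x < m)%N ha) insubN.
Qed.

Lemma mxn_mul (T : pzRingType) m n p (M : 'M[T]_(m,n)) (N : 'M[T]_(n,p)) a c :
  (a < m)%N -> (c < p)%N ->
  mxn (M *m N) a c = \sum_(b < n) mxn M a b * mxn N b c.
Proof.
move=> ha hc; rewrite (mxnE' _ ha hc) mxE; apply: eq_bigr => b _.
by rewrite -[a]/(nat_of_ord (Ordinal ha)) -[c]/(nat_of_ord (Ordinal hc)) !mxnE.
Qed.

Lemma mxn_map (T S : zmodType) (f : {additive T -> S}) m n (M : 'M[T]_(m,n)) a b :
  mxn (map_mx f M) a b = f (mxn M a b).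
Proof.
case: (boolP ((a < m) && (b < n))%N) => [/andP[ha hb]|h].
  by rewrite !(mxnE' _ ha hb) mxE.
by rewrite !mxn_out // raddf0.
Qed.

Lemma mxn_opp (T : zmodType) m n (M : 'M[T]_(m,n)) a b :
  mxn (- M) a b = - mxn M a b.
Proof.
case: (boolP ((a < m) && (b < n))%N) => [/andP[ha hb]|h].
  by rewrite !(mxnE' _ ha hb) mxE.
by rewrite !mxn_out // oppr0.
Qed.

Definition psum (f : nat -> nat) (i : nat) := (\sum_(j < i) f j)%N.

Lemma psumS f i : psum f i.+1 = (psum f i + f i)%N.
Proof. by rewrite /psum big_ord_recr. Qed.

Lemma psum_mono f i j : (i <= j)%N -> (psum f i <= psum f j)%N.
Proof.
move=> /subnK <-; elim: (j - i)%N => //= d IH.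
by rewrite addSn psumS; apply: leq_trans IH (leq_addr _ _).
Qed.

Lemma psum_dec f m q : (q < psum f m)%N ->
  exists j b, [/\ (j < m)%N, (b < f j)%N & q = (psum f j + b)%N].
Proof.
elim: m => [|m IH]; first by rewrite /psum big_ord0.
rewrite psumS => hq; case: (ltnP q (psum f m)) => h.
  by have [j [b [h1 h2 h3]]] := IH h; exists j, b; split => //; apply: ltnW.
by exists m, (q - psum f m)%N; split => //; lia.
Qed.

Lemma psum_uniq f i j q :
  (psum f i <= q < psum f i.+1)%N -> (psum f j <= q < psum f j.+1)%N -> i = j.
Proof.
move=> /andP[h1 h2] /andP[h3 h4]; apply/eqP; rewrite eqn_leq; apply/andP; split.
  rewrite leqNgt; apply/negP => hji.
  by have := psum_mono f hji; lia.
rewrite leqNgt; apply/negP => hij.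
by have := psum_mono f hij; lia.
Qed.

Lemma blk_sum (R : nmodType) (f : nat -> nat) j n (G : nat -> R) :
  (psum f j.+1 <= n)%N ->
  \sum_(q < n) (if (psum f j <= q < psum f j.+1)%N then G q else 0)
  = \sum_(b < f j) G (psum f j + b)%N.
Proof.
move=> hn.
rewrite -(big_mkord xpredT (fun q => if (psum f j <= q < psum f j.+1)%N then G q else 0)).
rewrite (@big_cat_nat _ _ _ (psum f j)) //=; last by apply: leq_trans hn; apply: psum_mono.
rewrite big_nat_cond big1 ?add0r; last by move=> q /andP[/andP[_ h] _]; rewrite leqNgt h.
rewrite (@big_cat_nat _ _ _ (psum f j.+1)) //=; last by apply: psum_mono.
rewrite [X in _ + X]big_nat_cond [X in _ + X]big1 ?addr0; last first.
  by move=> q /andP[/andP[h _] _]; rewrite ltnNge h andbF.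
rewrite -{1}[psum f j]add0n big_addn.
have -> : (psum f j.+1 - psum f j = f j)%N by rewrite psumS addKn.
rewrite big_mkord; apply: eq_bigr => b _.
have hb := ltn_ord b; rewrite psumS ifT; first by rewrite addnC.
apply/andP; split; lia.
Qed.



Lemma ut_diag (F : fieldType) m (A : 'M[F]_m) :
  upper_triangular A -> A \in unitmx -> forall i, A i i != 0.
Proof.
move=> hu hA i; move: hA; rewrite unitmxE unitfE -det_tr det_trig.
  by move/prodf_eq0 => h; apply/negP => /eqP e; apply: h; exists i => //; rewrite mxE e.
by apply/is_trig_mxP => a b hab; rewrite mxE hu.
Qed.

Lemma ut_mul_entry (F : fieldType) m (A M : 'M[F]_m) (i j : 'I_m) :
  upper_triangular A -> (forall f : 'I_m, (i < f)%N -> M f j = 0) ->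
  (A *m M) i j = A i i * M i j.
Proof.
move=> hu hM; rewrite mxE (bigD1 i) //= big1 ?addr0 // => f hf.
case: (ltngtP f i) => h.
- by rewrite hu // mul0r.
- by rewrite hM // mulr0.
- by move/eqP: hf; case; apply: val_inj.
Qed.

Lemma ut_inv_mul (F : fieldType) m (A E : 'M[F]_m) :
  upper_triangular A -> upper_triangular E -> A \in unitmx -> E \in unitmx ->
  upper_triangular (invmx A *m E) /\ forall i, (invmx A *m E) i i != 0.
Proof.
move=> hA hE uA uE; set M := invmx A *m E.
have hAM : A *m M = E by rewrite /M mulKVmx.
have tri : forall r (i : 'I_m), (m - i <= r)%N -> forall j : 'I_m, (j < i)%N -> M i j = 0.
  elim=> [|r IH] i hr j hj; first by have := ltn_ord i; lia.
  have e : (A *m M) i j = A i i * M i j.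
    by apply: ut_mul_entry => // f hf; apply: (IH f); lia.
  move: e; rewrite hAM hE // => /esym/eqP; rewrite mulf_eq0 (negbTE (ut_diag hA uA i)) /=.
  by move/eqP.
have triM : upper_triangular M by move=> i j; apply: (tri m); lia.
split=> // i.
have e : (A *m M) i i = A i i * M i i.
  by apply: ut_mul_entry => // f hf; apply: triM.
have : E i i != 0 by exact: ut_diag.
by rewrite -hAM e mulf_eq0 negb_or => /andP[].
Qed.



Section Main.
Variable C : fieldType.
Variables (k : nat) (t : nat -> nat).
Variables (A Ehat : forall i : nat, 'M[C]_(t i.+1)).

Local Notation K := {fraction {poly C}}.
Local Notation l := (tofrac ('X : {poly C}) : K).
Local Notation gc c := (tofrac (c%:P : {poly C}) : K).
Local Notation P := (pencil k A Ehat).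
Local Notation n := (ncols k t).
Local Notation nr := (nrows k t).

Lemma coffE j : coff t j = psum t j. Proof. by []. Qed.
Lemma roffE i : roff t i = psum (fun i => t i.+1) i. Proof. by []. Qed.
Lemma roffS i : roff t i.+1 = (roff t i + t i.+1)%N. Proof. by rewrite roffE psumS. Qed.
Lemma coffS i : coff t i.+1 = (coff t i + t i)%N. Proof. by rewrite coffE psumS. Qed.

Lemma toFP_E (p : 'I_nr) (q : 'I_n) : toF P p q =
  \sum_(i < k.-1)
      (if (roff t i <= p < roff t i.+1)%N then
         (if (coff t i <= q < coff t i.+1)%N
          then gc (Eblk Ehat i (p - roff t i) (q - coff t i)) * l else 0)
       + (if (coff t i.+1 <= q < coff t i.+2)%N
          then gc (mxn (A i) (p - roff t i) (q - coff t i.+1)) else 0)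
       else 0).
Proof.
rewrite /toF mxE /pencil mxE rmorph_sum; apply: eq_bigr => i _.
case: ifP => _; last by rewrite rmorph0.
rewrite rmorphD; congr (_ + _); case: ifP => _; rewrite ?rmorph0 //.
by rewrite rmorphM.
Qed.

Lemma PV d (M : 'M[K]_(n, d)) (p : 'I_nr) (c : 'I_d) i a :
  (i < k.-1)%N -> (a < t i.+1)%N -> (p : nat) = (roff t i + a)%N ->
  (toF P *m M) p c =
  \sum_(b < t i) gc (Eblk Ehat i a b) * l * mxn M (coff t i + b) c
  + \sum_(b < t i.+1) gc (mxn (A i) a b) * mxn M (coff t i.+1 + b) c.
Proof.
move=> hi ha hp; rewrite mxE.
under eq_bigr do rewrite toFP_E big_distrl.
rewrite exchange_big (bigD1 (Ordinal hi)) //= [X in _ + X]big1 ?addr0; last first.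
  move=> i' hi'; apply: big1 => q _.
  case: ifP => h; last by rewrite mul0r. exfalso; move/eqP: hi'; apply; apply: val_inj => /=.
  apply: (@psum_uniq (fun i => t i.+1) _ _ p); first by rewrite -!roffE.
  by rewrite -!roffE hp roffS; apply/andP; split; lia.
have hin : (roff t i <= p < roff t i.+1)%N.
  by rewrite hp roffS; apply/andP; split; lia.
under eq_bigr => q _ do rewrite hin.
have hpa : (p - roff t i = a)%N by rewrite hp addKn.
rewrite hpa.
under eq_bigr do rewrite mulrDl.
rewrite big_split /=; congr (_ + _).
  pose G q := gc (Eblk Ehat i a (q - coff t i)) * l * mxn M q c.
  apply: etrans (_ : _ = \sum_(q < n) (if (psum t i <= q < psum t i.+1)%N then G q else 0)) _.
    apply: eq_bigr => q _; rewrite -!coffE; case: ifP => _; last by rewrite mul0r.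
    by rewrite /G mxnE.
  rewrite blk_sum; last by apply: psum_mono; lia.
  by apply: eq_bigr => b _; rewrite /G coffE addKn.
pose G q := gc (mxn (A i) a (q - coff t i.+1)) * mxn M q c.
apply: etrans (_ : _ = \sum_(q < n) (if (psum t i.+1 <= q < psum t i.+2)%N then G q else 0)) _.
  apply: eq_bigr => q _; rewrite -!coffE; case: ifP => _; last by rewrite mul0r.
  by rewrite /G mxnE.
rewrite blk_sum; last by apply: psum_mono; lia.
by apply: eq_bigr => b _; rewrite /G coffE addKn.
Qed.

Definition Emat i : 'M[C]_(t i.+1, t i) := \matrix_(a < t i.+1, b < t i) Eblk Ehat i a b.

Lemma Zblk_E i : Zblk A Ehat i = - (invmx (A i) *m Emat i).
Proof.
apply/matrixP => a b; rewrite !mxE.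
under [X in _ = - X]eq_bigr do rewrite mxE /Eblk.
case: ifP => hb.
  rewrite mxn_opp mxn_mul //; last by have := ltn_ord b; lia.
  by congr (- _); apply: eq_bigr => e _; rewrite mxnE.
by rewrite big1 ?oppr0 // => e _; rewrite mulr0.
Qed.

Hypothesis hk : (2 <= k)%N.
Hypothesis tdec : forall i, (i < k.-1)%N -> (t i.+1 <= t i)%N.
Hypothesis hAE : forall i, (i < k.-1)%N ->
     [/\ A i \in unitmx, Ehat i \in unitmx,
         upper_triangular (A i) & upper_triangular (Ehat i)].

Lemma AZ i : (i < k.-1)%N -> A i *m Zblk A Ehat i = - Emat i.
Proof.
move=> hi; have [hA _ _ _] := hAE hi.
by rewrite Zblk_E mulmxN mulmxA mulmxV // mul1mx.
Qed.

Lemma coff_lt j b : (j < k)%N -> (b < t j)%N -> (coff t j + b < n)%N.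
Proof.
move=> hj hb; apply: (@leq_trans (coff t j.+1)); first by rewrite coffS; lia.
by rewrite /ncols !coffE; apply: psum_mono.
Qed.

Lemma NE j b (c : 'I_(t 0)) : (j < k)%N -> (b < t j)%N ->
  mxn (Nmat k A Ehat) (coff t j + b) c = (mxn (Zprod A Ehat j) b c)%:P * 'X^j.
Proof.
move=> hj hb; rewrite (mxnE' _ (coff_lt hj hb) (ltn_ord c)) mxE.
rewrite (bigD1 (Ordinal hj)) //= big1 ?addr0; last first.
  move=> j' hj'; case: ifP => // h; exfalso; move/eqP: hj'; apply; apply: val_inj => /=.
  apply: (@psum_uniq t _ _ (coff t j + b)); first by rewrite -!coffE.
  by rewrite -!coffE coffS; apply/andP; split; lia.
by rewrite ifT ?addKn // coffS; apply/andP; split; lia.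
Qed.

Lemma NEK j b (c : 'I_(t 0)) : (j < k)%N -> (b < t j)%N ->
  mxn (toF (Nmat k A Ehat)) (coff t j + b) c = gc (mxn (Zprod A Ehat j) b c) * l ^+ j.
Proof.
by move=> hj hb; rewrite /toF mxn_map /= NE // tofracM tofracXn.
Qed.

Lemma EmatE i a b : (a < t i.+1)%N -> (b < t i)%N -> mxn (Emat i) a b = Eblk Ehat i a b.
Proof. by move=> ha hb; rewrite (mxnE' _ ha hb) mxE. Qed.

Lemma L1 : toF P *m toF (Nmat k A Ehat) = 0.
Proof.
apply/matrixP => p c; rewrite [RHS]mxE.
have hp : (p < psum (fun i => t i.+1) k.-1)%N by exact: ltn_ord.
have [i [a [hi ha hpe]]] := psum_dec hp.
rewrite (PV _ _ hi ha hpe).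
have hik : (i < k)%N by lia.
have hi1k : (i.+1 < k)%N by lia.
under eq_bigr => b _ do rewrite (NEK c hik (ltn_ord b)).
under [X in _ + X]eq_bigr => b _ do rewrite (NEK c hi1k (ltn_ord b)).
apply: etrans (_ : _ = l ^+ i.+1 * 0) (mulr0 _).
rewrite (_ : \sum_(b < t i) _ = l ^+ i.+1 * gc (mxn (Emat i *m Zprod A Ehat i) a c)); last first.
  rewrite mxn_mul // rmorph_sum /= rmorph_sum big_distrr /=; apply: eq_bigr => b _.
  by rewrite EmatE // polyCM tofracM exprS; ring.
rewrite (_ : \sum_(b < t i.+1) _ = l ^+ i.+1 * gc (mxn (A i *m Zprod A Ehat i.+1) a c)); last first.
  rewrite mxn_mul // rmorph_sum /= rmorph_sum big_distrr /=; apply: eq_bigr => b _.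
  by rewrite polyCM tofracM; ring.
rewrite -mulrDr; congr (_ * _).
rewrite /= mulmxA AZ // mulNmx mxn_opp -!rmorphD /=.
by rewrite addrN !rmorph0.
Qed.


Lemma t0n : (t 0 <= n)%N.
Proof.
have -> : t 0 = psum t 1 by rewrite psumS /psum big_ord0.
by apply: psum_mono; lia.
Qed.

Definition Ltop (R : pzRingType) : 'M[R]_(t 0, n) :=
  \matrix_(a < t 0, q < n) ((q : nat) == a)%:R.

Lemma Ltop_mul (R : pzRingType) d (X : 'M[R]_(n, d)) a c :
  (Ltop R *m X) a c = mxn X a c.
Proof.
have ha : (a < n)%N by apply: leq_trans (ltn_ord a) t0n.
rewrite mxE (bigD1 (Ordinal ha)) //= big1 ?addr0.
  by rewrite mxE eqxx mul1r -[in RHS](_ : val (Ordinal ha) = a) // mxnE.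
move=> q hq; rewrite mxE; case: eqP => [e|]; last by rewrite mul0r.
by exfalso; move/eqP: hq; apply; apply: val_inj.
Qed.

Local Notation f := (@tofrac _ \o @polyC C).

Lemma L2 d (X : 'M[K]_(n, d)) : toF P *m X = 0 ->
  X = toF (Nmat k A Ehat) *m (Ltop K *m X).
Proof.
move=> hX.
pose W j : 'M[K]_(t j, d) := \matrix_(b < t j, c < d) mxn X (coff t j + b) c.
have step : forall j, (j < k.-1)%N ->
    W j.+1 = l *: (map_mx f (Zblk A Ehat j) *m W j).
  move=> j hj; have [hA _ _ _] := hAE hj.
  have eq1 : map_mx f (A j) *m W j.+1 = - (l *: (map_mx f (Emat j) *m W j)).
    apply/matrixP => a c.
    have hp : (roff t j + a < nr)%N.
      apply: (@leq_trans (roff t j.+1)); first by have := ltn_ord a; rewrite roffS; lia.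
      by rewrite /nrows !roffE; apply: psum_mono.
    have := congr1 (fun M : 'M[K]_(nr, d) => M (Ordinal hp) c) hX.
    rewrite (PV _ _ hj (ltn_ord a)) // mxE => /eqP; rewrite addr_eq0 => /eqP e.
    rewrite !mxE; apply: etrans (_ : _ = \sum_(b < t j.+1) gc (mxn (A j) a b) * mxn X (coff t j.+1 + b) c) _.
      by apply: eq_bigr => b _; rewrite !mxE mxnE.
    rewrite -[LHS]opprK -e; congr (- _); rewrite mulr_sumr; apply: eq_bigr => b _.
    by rewrite !mxE /=; ring.
  rewrite -[W j.+1](mulKmx (_ : map_mx f (A j) \in unitmx)) ?map_unitmx //.
  rewrite eq1 Zblk_E map_mxN map_mxM map_invmx mulNmx mulmxN scalemxAr mulmxA.
  by rewrite -scalemxAr scalerN.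
have hW : forall j, (j < k)%N -> W j = l ^+ j *: (map_mx f (Zprod A Ehat j) *m W 0).
  elim=> [|j IH] hj; first by rewrite /= map_mx1 mul1mx expr0 scale1r.
  rewrite step; last by lia.
  rewrite IH; last by lia.
  rewrite scalemxAr scalerA -exprS /= map_mxM.
  by rewrite -scalemxAr mulmxA.
apply/matrixP => q c.
have hq : (q < psum t k)%N by exact: ltn_ord.
have [j [b [hj hb hqe]]] := psum_dec hq.
have := congr1 (fun M : 'M[K]_(t j, d) => M (Ordinal hb) c) (hW j hj).
rewrite /W !mxE /= => h.
rewrite -[X q c]mxnE hqe -coffE h mulr_sumr; apply: eq_bigr => e _.
rewrite Ltop_mul -(mxnE (toF (Nmat k A Ehat)) q e) hqe -coffE NEK // !mxE.
rewrite -(mxnE (Zprod A Ehat j) (Ordinal hb) e) /= /coff big_ord0 add0n.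
ring.
Qed.


Lemma rankN : \rank (toF (Nmat k A Ehat)) = t 0.
Proof.
apply/eqP; rewrite eqn_leq rank_leq_col /=.
have e : Ltop K *m toF (Nmat k A Ehat) = 1%:M.
  apply/matrixP => a c; rewrite Ltop_mul.
  have h0 : (0 < k)%N by lia.
  have := NEK c h0 (ltn_ord a); rewrite /coff big_ord0 add0n => ->.
  by rewrite expr0 mulr1 /= mxnE !mxE; case: eqP => _; rewrite ?rmorph1 ?rmorph0.
by rewrite -{1}(mxrank1 K (t 0)) -e mxrankM_maxr.
Qed.

Lemma span_rank d (X : 'M[K]_(n, d)) :
  (forall x : 'cV[K]_n, toF P *m x = 0 -> exists c : 'cV[K]_d, x = X *m c) ->
  (n - \rank (toF P) <= \rank X)%N.
Proof.
move=> hs; rewrite -mxrank_tr -(mxrank_tr X) -mxrank_ker; apply: mxrankS.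
apply/row_subP => i.
have hx : toF P *m (row i (kermx (toF P)^T))^T = 0.
  by apply: trmx_inj; rewrite trmx_mul trmxK -row_mul mulmx_ker row0 trmx0.
have [c hc] := hs _ hx.
by rewrite -[row i _]trmxK hc trmx_mul submxMl.
Qed.

Lemma conj1 : (n - normal_rank P = t 0)%N.
Proof.
rewrite /normal_rank; apply/eqP; rewrite eqn_leq; apply/andP; split.
  by rewrite -rankN; apply: span_rank => x hx; exists (Ltop K *m x); exact: L2.
have := mulmx0_rank_max L1; rewrite rankN; lia.
Qed.

Lemma basisN : poly_rnull_basis P (Nmat k A Ehat).
Proof.
split; [exact: L1 | exact: rankN |].
by move=> x hx; exists (Ltop K *m x); exact: L2.
Qed.


Lemma tle m : (m < k)%N -> (t m <= t 0)%N.
Proof.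
elim: m => // m IH hm; apply: leq_trans (tdec _) (IH _); lia.
Qed.

Local Notation Mi i := (invmx (A i) *m Ehat i).

Lemma ZB i b e : (b < t i.+1)%N -> (e < t i)%N ->
  mxn (Zblk A Ehat i) b e =
  if (t i - t i.+1 <= e)%N then - mxn (Mi i) b (e - (t i - t i.+1)) else 0.
Proof.
by move=> hb he; rewrite (mxnE' _ hb he) mxE mxn_opp.
Qed.

Lemma Mi_tri i b e : (i < k.-1)%N -> (b < t i.+1)%N -> (e < b)%N -> mxn (Mi i) b e = 0.
Proof.
move=> hi hb heb; have [uA uE hA hE] := hAE hi.
have [tri _] := ut_inv_mul hA hE uA uE.
have he : (e < t i.+1)%N by lia.
by rewrite (mxnE' _ hb he) tri.
Qed.

Lemma Mi_diag i b : (i < k.-1)%N -> (b < t i.+1)%N -> mxn (Mi i) b b != 0.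
Proof.
move=> hi hb; have [uA uE hA hE] := hAE hi.
have [_ dg] := ut_inv_mul hA hE uA uE.
by rewrite (mxnE' _ hb hb) dg.
Qed.

Lemma stair m : (m < k)%N ->
  (forall b c, (b < t m)%N -> (c < t 0 - t m + b)%N -> mxn (Zprod A Ehat m) b c = 0) /\
  (forall b, (b < t m)%N -> mxn (Zprod A Ehat m) b (t 0 - t m + b) != 0).
Proof.
elim: m => [|m IH] hm.
  split=> [b c hb hc|b hb] /=.
    have hc' : (c < t 0)%N by lia.
    rewrite (mxnE' _ hb hc') mxE; case: eqP => // e.
    have := congr1 val e => /= ?; lia.
  by rewrite subnn add0n (mxnE' _ hb hb) mxE eqxx oner_neq0.
have hmk : (m < k.-1)%N by lia.
have [IH1 IH2] := IH (ltnW hm).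
have t1 := tdec hmk; have t2 := tle (ltnW hm).
split=> [b c hb hc|b hb].
  have hc' : (c < t 0)%N by lia.
  rewrite /= mxn_mul //; apply: big1 => e _.
  have he := ltn_ord e.
  rewrite ZB //; case: ifP => h1; last by rewrite mul0r.
  case: (ltnP (e - (t m - t m.+1)) b) => h2.
    by rewrite Mi_tri // oppr0 mul0r.
  by rewrite IH1 ?mulr0 //; lia.
have hc' : (t 0 - t m.+1 + b < t 0)%N by lia.
have he0 : (t m - t m.+1 + b < t m)%N by lia.
rewrite /= mxn_mul // (bigD1 (Ordinal he0)) //= big1 ?addr0.
  rewrite ZB // ifT; last by lia.
  have -> : (t m - t m.+1 + b - (t m - t m.+1) = b)%N by lia.
  have -> : (t 0 - t m.+1 + b = t 0 - t m + (t m - t m.+1 + b))%N by lia.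
  by rewrite mulf_neq0 ?oppr_eq0 ?Mi_diag // IH2.
move=> e he; have he' := ltn_ord e.
have hne : (e : nat) != (t m - t m.+1 + b)%N.
  by apply/eqP => q; move/eqP: he; apply; apply: val_inj.
rewrite ZB //; case: ifP => h1; last by rewrite mul0r.
case: (ltnP (e - (t m - t m.+1)) b) => h2.
  by rewrite Mi_tri // oppr0 mul0r.
by rewrite IH1 ?mulr0 //; lia.
Qed.


Lemma toF_Ltop : toF (Ltop {poly C}) = Ltop K.
Proof. by apply/matrixP => a q; rewrite !mxE rmorph_nat. Qed.

Lemma toF_inj m1 m2 (X Y : 'M[{poly C}]_(m1, m2)) : toF X = toF Y -> X = Y.
Proof.
move=> e; apply/matrixP => i j; have := congr1 (fun M : 'M[K]_(m1, m2) => M i j) e.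
by rewrite /toF !mxE => /eqP; rewrite tofrac_eq => /eqP.
Qed.

Lemma key2 m (x : 'I_(t 0) -> {poly C}) (c : 'I_(t 0)) :
  (m < k)%N -> (t 0 - t m <= c)%N -> x c != 0 ->
  exists2 b, (b < t m)%N &
    \sum_(c' < t 0) (mxn (Zprod A Ehat m) b c')%:P * x c' != 0.
Proof.
move=> hm hc hx.
case: (@arg_maxnP _ c (fun i => x i != 0) (fun i => nat_of_ord i) hx) => cs hcs hmax.
have hcsc : (c <= cs)%N by exact: hmax.
have t2 := tle hm.
have hcs0 := ltn_ord cs.
exists (cs - (t 0 - t m))%N; first by lia.
have [Z1 Z2] := stair hm.
rewrite (bigD1 cs) //= big1 ?addr0.
  have e : (cs : nat) = (t 0 - t m + (cs - (t 0 - t m)))%N by lia.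
  rewrite [X in mxn _ _ X]e mulf_neq0 // polyC_eq0 Z2 //; lia.
move=> c' hc'.
have hne : (c' : nat) != cs by apply/eqP => q; move/eqP: hc'; apply; apply: val_inj.
case: (ltnP c' cs) => h.
  by rewrite Z1 ?mul0r //; lia.
case: (boolP (x c' == 0)) => [/eqP -> | h']; first by rewrite mulr0.
have := hmax c' h'; lia.
Qed.

Lemma key (B : 'M[{poly C}]_(n, t 0)) (Cm : 'M[{poly C}]_(t 0, t 0)) (c j : 'I_(t 0)) :
  B = Nmat k A Ehat *m Cm -> Cm c j != 0 ->
  (\max_(q < n) (size (Nmat k A Ehat q c)).-1 <= \max_(q < n) (size (B q j)).-1)%N.
Proof.
move=> hB hC; apply/bigmax_leqP => q _.
have hq : (q < psum t k)%N by exact: ltn_ord.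
have [m [b [hm hb hqe]]] := psum_dec hq.
rewrite -mxnE hqe -coffE NE //.
case: (boolP (mxn (Zprod A Ehat m) b c == 0)) => [/eqP -> | hz].
  by rewrite mul0r size_poly0.
have [Z1 Z2] := stair hm.
have hcm : (t 0 - t m <= c)%N.
  by rewrite leqNgt; apply/negP => h; move/eqP: hz; apply; apply: Z1 => //; lia.
rewrite mul_polyC size_scale // size_polyXn /=.
have [b' hb' hS] := key2 (x := fun c' => Cm c' j) hm hcm hC.
have hq' := coff_lt hm hb'.
apply: leq_trans (leq_bigmax (Ordinal hq')).
rewrite hB -mxnE /= mxn_mul //.
under eq_bigr => e _ do rewrite NE // mxnE -mulrA [X in _ * X]mulrC mulrA.
rewrite -big_distrl /= size_mul // ?size_polyXn; last by rewrite -size_poly_eq0 size_polyXn.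
move: hS; rewrite -size_poly_eq0 -lt0n.
case: (size _) => [//|s] _; lia.
Qed.


Lemma toF_mul m1 m2 m3 (X : 'M[{poly C}]_(m1, m2)) (Y : 'M[{poly C}]_(m2, m3)) :
  toF (X *m Y) = toF X *m toF Y.
Proof. exact: map_mxM. Qed.

Lemma minimal d' (B : 'M[{poly C}]_(n, d')) :
  poly_rnull_basis P B -> (coldeg_sum (Nmat k A Ehat) <= coldeg_sum B)%N.
Proof.
move=> [h1 h2 h3].
have hX := L2 h1.
pose Cm := Ltop {poly C} *m B.
have hC : toF Cm = Ltop K *m toF B by rewrite toF_mul toF_Ltop.
have hB : B = Nmat k A Ehat *m Cm by apply: toF_inj; rewrite toF_mul hC.
have ed : d' = t 0.
  apply/eqP; rewrite eqn_leq; apply/andP; split.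
    rewrite -h2 hX; apply: leq_trans (mxrankM_maxr _ _) _; exact: rank_leq_row.
  by rewrite -h2 -conj1; exact: span_rank h3.
subst d'.
have hu : toF Cm \in unitmx.
  rewrite -row_full_unit /row_full eqn_leq rank_leq_col /=.
  by rewrite -{1}h2 hX -hC mxrankM_maxr.
have hdet : \det Cm != 0.
  by move: hu; rewrite unitmxE unitfE /toF det_map_mx tofrac_eq0.
have [s hs] : exists s : 'S_(t 0), forall i, Cm i (s i) != 0.
  case: (boolP [exists s : 'S_(t 0), \prod_i Cm i (s i) != 0]) => [/existsP[s hs] | /existsPn hn].
    exists s => i; apply/negP => /eqP h0; move/negP: hs; apply.
    by apply/prodf_eq0; exists i => //; rewrite h0.
  exfalso; move/negP: hdet; apply; apply/eqP.
  rewrite /determinant big1 // => s' _; move: (hn s'); rewrite negbK => /eqP ->.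
  by rewrite mulr0.
rewrite /coldeg_sum [X in (_ <= X)%N](reindex_inj (@perm_inj _ s)) /=.
by apply: leq_sum => i _; apply: key hB (hs i).
Qed.

End Main.

Theorem theorem5p8 (R : realType) (k : nat) (t : nat -> nat)
  (A Ehat : forall i : nat, 'M[complex R]_(t i.+1)) :
  (2 <= k)%N ->
  (forall i, (i < k.-1)%N -> (t i.+1 <= t i)%N) ->
  (forall i, (i < k.-1)%N ->
     [/\ A i \in unitmx, Ehat i \in unitmx,
         upper_triangular (A i) & upper_triangular (Ehat i)]) ->
  (ncols k t - normal_rank (pencil k A Ehat) = t 0)%N /\
  min_poly_basis (pencil k A Ehat) (Nmat k A Ehat).
Proof.
move=> hk tdec hAE; split; first by apply: conj1.
split; first by apply: basisN.
by move=> d' B hB; apply: minimal.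
Qed.
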